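(* Assume the standing hypotheses in the context. Let $x(t)$ be any solution of $x'=A(t)x+f(t,x)$. Then the system $$Z'(t)=A(t)Z(t)+f(t,x(t)+Z(t))-f(t,x(t))$$ has a unique solution bounded on $\mathbb{R}$, namely $Z\equiv0$.
   Context: Standing hypotheses: $A:\mathbb{R}\to\mathbb{R}^{n\times n}$ is continuous and bounded, $T(t,s)$ is the evolution operator of $x'=A(t)x$. $\mu:\mathbb{R}\to(0,\infty)$ is an increasing differentiable growth rate: $\mu(0)=1$, $\lim_{t\to-\infty}\mu(t)=0$, $\lim_{t\to+\infty}\mu(t)=+\infty$. The system $x'=A(t)x$ admits an algebraic dichotomy: projections $P(s)$, $Q(s)=I-P(s)$, constants $K,\alpha>0$ with $T(t,s)P(s)=P(t)T(t,s)$, $\|T(t,s)P(s)\|\le K(\mu(t)/\mu(s))^{-\alpha}$ ($t\ge s$), $\|T(t,s)Q(s)\|\le K(\mu(s)/\mu(t))^{-\alpha}$ ($t\le s$). $f:\mathbb{R}\times\mathbb{R}^n\to\mathbb{R}^n$ is continuous, $\|f(t,x)\|\le\beta\mu'(t)\mu^{-1}(t)$, $\|f(t,x_1)-f(t,x_2)\|\le\gamma\mu'(t)\mu^{-1}(t)\|x_1-x_2\|$ for constants $\beta,\gamma\ge0$, and $6K\gamma\alpha^{-1}<1$. *)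

(* Defs.v *)
From HB Require Import structures.
From mathcomp Require Import all_boot all_order all_algebra.
From mathcomp Require Import all_classical all_reals all_analysis.
Set Implicit Arguments. Unset Strict Implicit. Unset Printing Implicit Defensive.
Import Order.TTheory GRing.Theory Num.Theory.
Import numFieldNormedType.Exports.
Local Open Scope ring_scope.
Local Open Scope classical_set_scope.

Definition growth_rate (R : realType) (mu : R -> R) : Prop :=
  (forall t, 0 < mu t) /\
  (forall s t, s < t -> mu s < mu t) /\
  (forall t, derivable mu t 1) /\
  mu 0 = 1 /\
  (mu x @[x --> -oo] --> (0:R)) /\
  (mu x @[x --> +oo] --> +oo).

Definition evolution_operator (R : realType) (n : nat)
  (A : R -> 'M[R]_n) (T : R -> R -> 'M[R]_n) : Prop :=
  (forall s, T s s = 1%:M) /\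
  (forall t s : R, is_derive t (1:R) (fun u => T u s) (A t *m T t s)).

(* Algebraic (mu-)dichotomy with projections P, constants K, alpha.
   Operator-norm bounds ||M|| <= c are written as ||M v|| <= c ||v|| for all v. *)
Definition algebraic_dichotomy (R : realType) (n : nat)
  (T : R -> R -> 'M[R]_n) (mu : R -> R) (P : R -> 'M[R]_n) (K alpha : R) : Prop :=
  0 < K /\ 0 < alpha /\ (forall s, P s *m P s = P s) /\
  [/\
      (forall t s, T t s *m P s = P t *m T t s),
      (forall t s (v : 'cV[R]_n), s <= t ->
          `|T t s *m P s *m v| <= K * powR (mu t / mu s) (- alpha) * `|v|) &
      (forall t s (v : 'cV[R]_n), t <= s ->
          `|T t s *m (1%:M - P s) *m v| <= K * powR (mu s / mu t) (- alpha) * `|v|)].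

Definition is_solution (R : realType) (n : nat)
  (F : R -> 'cV[R]_n -> 'cV[R]_n) (x : R -> 'cV[R]_n) : Prop :=
  forall t : R, is_derive t (1:R) x (F t (x t)).

Definition bounded_on_R (R : realType) (n : nat) (x : R -> 'cV[R]_n) : Prop :=
  exists M : R, forall t, `|x t| <= M.

(* Main.v *)
Require Import Defs.
From HB Require Import structures.
From mathcomp Require Import all_boot all_order all_algebra.
From mathcomp Require Import all_classical all_reals all_analysis.
From mathcomp Require Import lra ring.
Import Order.TTheory GRing.Theory Num.Theory.
Import numFieldNormedType.Exports.

Module Aux.
Set Implicit Arguments. Unset Strict Implicit.
Local Open Scope classical_set_scope.
Local Open Scope ring_scope.

Section Norms.
Variable R : realType.

Lemma mx_entry_le m n (M : 'M[R]_(m, n)) i j : `|M i j| <= `|M|.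
Proof.
rewrite [leRHS]/Num.Def.normr /= mx_normrE.
by apply: (le_trans _ (le_bigmax _ _ (i, j))).
Qed.

Lemma mx_norm_le m n (M : 'M[R]_(m, n)) c :
  0 <= c -> (forall i j, `|M i j| <= c) -> `|M| <= c.
Proof.
move=> c0 H; rewrite [leLHS]/Num.Def.normr /= mx_normrE.
by apply: bigmax_le => // -[i j] _; apply: H.
Qed.

Lemma mulmx_norm m p q (A : 'M[R]_(m, p)) (B : 'M[R]_(p, q)) :
  `|A *m B| <= p%:R * `|A| * `|B|.
Proof.
apply: mx_norm_le; first by rewrite !mulr_ge0.
move=> i j; rewrite mxE.
apply: (le_trans (ler_norm_sum _ _ _)).
have H k : `|A i k * B k j| <= `|A| * `|B|.
  by rewrite normrM ler_pM ?mx_entry_le.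
apply: le_trans (ler_sum _ (fun k _ => H k)) _.
by rewrite sumr_const card_ord -mulrA mulr_natl.
Qed.

Lemma mx_norm1 n : `|(1%:M : 'M[R]_n)| <= 1.
Proof.
apply: mx_norm_le => // i j; rewrite mxE.
by case: (i == j); rewrite ?normr1 ?normr0.
Qed.

Lemma zmod_gen4 (V : zmodType) (a b c d : V) :
  a - d = a - b - (c - d) + (b - d) + (c - d).
Proof. by rewrite -[RHS]addrA [in RHS](addrC (b - d)) [RHS]addrA subrK -addrA addKr. Qed.

Lemma le_norm_cvg0 {T} {F : set_system T} {FF : Filter F} (V : normedModType R)
  (u : T -> V) (v : T -> R) :
  (\forall x \near F, `|u x| <= v x) -> v @ F --> 0 -> u @ F --> 0.
Proof.
move=> uv /cvgr0Pnorm_lt vc; apply/cvgr0Pnorm_lt => e e0.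
have := vc e e0; apply: filter_app2 uv; apply: filterE => x h1 h2.
by apply: le_lt_trans h1 (le_lt_trans (ler_norm _) h2).
Qed.

Lemma cvg_norm0 {T} {F : set_system T} {FF : Filter F} (V : normedModType R)
  (X : T -> V) (A : V) : X @ F --> A -> (fun x => `|X x - A|) @ F --> (0:R).
Proof.
move=> /subr_cvg0 /cvg_norm; by rewrite normr0.
Qed.

Lemma cvg_mulmx {T} {F : set_system T} {FF : Filter F} m p q
  (X : T -> 'M[R]_(m, p)) (Y : T -> 'M[R]_(p, q)) (A : 'M[R]_(m, p)) (B : 'M[R]_(p, q)) :
  X @ F --> A -> Y @ F --> B -> (fun x => X x *m Y x) @ F --> A *m B.
Proof.
move=> hX hY; apply/subr_cvg0.
apply: (@le_norm_cvg0 _ _ _ _ _ (fun x => p%:R * (`|X x - A| * `|Y x - B| +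
   `|X x - A| * `|B| + `|A| * `|Y x - B|))).
  apply: filterE => x.
  have -> : X x *m Y x - A *m B =
     (X x - A) *m (Y x - B) + (X x - A) *m B + A *m (Y x - B).
    by rewrite !mulmxBl !mulmxBr -zmod_gen4.
  rewrite !mulrDr.
  apply: le_trans (ler_normD _ _) _; apply: lerD; last by rewrite mulrA mulmx_norm.
  apply: le_trans (ler_normD _ _) _; apply: lerD; by rewrite mulrA mulmx_norm.
have -> : (0:R) = p%:R * (0 * 0 + 0 * `|B| + `|A| * 0) by rewrite !(mul0r,mulr0,addr0).
have h1 := @cvg_norm0 _ F FF _ X A hX; have h2 := @cvg_norm0 _ F FF _ Y B hY.
apply: cvgM; first exact: cvg_cst.
apply: cvgD; first apply: cvgD.
- exact: cvgM.
- by apply: cvgM => //; exact: cvg_cst.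
- by apply: cvgM => //; exact: cvg_cst.
Qed.

Lemma derive_cvgP (V : normedModType R) (f : R -> V) (a : R) (l : V) :
  is_derive a (1:R) f l <-> (fun h : R => h^-1 *: (f (h + a) - f a)) @ 0^' --> l.
Proof.
have E : (fun h : R => h^-1 *: ((f \o shift a) (h *: 1) - f a)) =
         (fun h : R => h^-1 *: (f (h + a) - f a)).
  by apply/funext => h /=; rewrite [h *: 1]mulr1.
split.
  move=> [df dv]; rewrite -dv /derive /=.
  move: df; rewrite /derivable E => df.
  exact: df.
move=> H; split.
  by rewrite /derivable E; apply/cvg_ex; exists l.
by rewrite /derive E; apply: cvg_lim.
Qed.

Lemma derive_cont (V : normedModType R) (f : R -> V) (a : R) (l : V) :
  is_derive a (1:R) f l -> (fun h : R => f (h + a)) @ 0^' --> f a.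
Proof.
move/derive_cvgP => H.
have E : \forall h \near (0:R)^', f a + h *: (h^-1 *: (f (h + a) - f a)) = f (h + a).
  near=> h.
  have hn : h != 0 by near: h; exact: nbhs_dnbhs_neq.
  by rewrite scalerA mulfV // scale1r addrC subrK.
apply: cvg_trans (near_eq_cvg E) _.
suff : (fun h : R => f a + h *: (h^-1 *: (f (h + a) - f a))) @ 0^' --> f a + 0 *: l.
  by rewrite scale0r addr0.
apply: cvgD; first exact: cvg_cst.
apply: cvgZ => //; exact: cvg_within.
Unshelve. all: by end_near.
Qed.

Lemma cvg_entry {T} {F : set_system T} {FF : Filter F} m n (X : T -> 'M[R]_(m, n)) (L : 'M[R]_(m, n)) i j :
  X @ F --> L -> (fun x => X x i j) @ F --> L i j.
Proof.
move=> H; apply/cvgrPdist_lt => e e0.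
move/cvgrPdist_lt: H => /(_ e e0); apply: filterS => x.
apply: le_lt_trans.
have -> : L i j - X x i j = (L - X x) i j by rewrite !mxE.
exact: mx_entry_le.
Qed.

Lemma derive_entry m n (F : R -> 'M[R]_(m, n)) (a : R) F' i j :
  is_derive a (1:R) F F' -> is_derive a (1:R) (fun u => F u i j) (F' i j).
Proof.
move/derive_cvgP => H; apply/derive_cvgP.
have E : (fun h : R => h^-1 *: (F (h + a) i j - F a i j)) =
          (fun h : R => (h^-1 *: (F (h + a) - F a)) i j).
  by apply/funext => h /=; rewrite !mxE.
rewrite E; exact: cvg_entry.
Qed.

End Norms.

Section MVB.
Variable R : realType.

Lemma incr_deriv (f df : R -> R) (a b : R) :
  (forall t, is_derive t (1:R) f (df t)) -> (forall t, a <= t <= b -> 0 <= df t) ->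
  a <= b -> f a <= f b.
Proof.
move=> fd dpos ab.
apply: (@ger0_derive1_ndecr R f a b) => //.
- move=> x; rewrite in_itv /= => /andP[ax xb].
  by rewrite derive1E (@derive_val _ _ _ _ _ _ _ (fd x)) dpos // !ltW.
- by apply: derivable_within_continuous => x _; have [] := fd x.
Qed.

Lemma mvb n m (F F' : R -> 'M[R]_(n, m)) (phi phi' : R -> R) (a b : R) :
  a <= b -> (forall t, is_derive t (1:R) F (F' t)) ->
  (forall t, is_derive t (1:R) phi (phi' t)) ->
  (forall t, a <= t <= b -> `|F' t| <= phi' t) -> `|F b - F a| <= phi b - phi a.
Proof.
move=> ab dF dphi hle.
apply: mx_norm_le.
  rewrite subr_ge0; apply: (@incr_deriv phi phi' a b dphi) => // t /hle; apply: le_trans; exact: normr_ge0.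
move=> i j; rewrite !mxE.
have H1 : phi a + F a i j <= phi b + F b i j.
  apply: (@incr_deriv (fun t => phi t + F t i j) (fun t => phi' t + F' t i j)) => //.
    move=> t; apply: is_deriveD; exact: derive_entry.
  move=> t /hle h; rewrite -lerBlDr sub0r; apply: le_trans h.
  apply: le_trans (ler_norm _) _; rewrite normrN; exact: mx_entry_le.
have H2 : phi a - F a i j <= phi b - F b i j.
  apply: (@incr_deriv (fun t => phi t - F t i j) (fun t => phi' t - F' t i j)) => //.
    move=> t; apply: is_deriveB; exact: derive_entry.
  move=> t /hle h; rewrite subr_ge0; apply: le_trans h.
  apply: le_trans (ler_norm _) _; exact: mx_entry_le.
rewrite ler_norml; apply/andP; split; lra.
Qed.

End MVB.

Section Gron.
Variable R : realType.

Definition sq n m (D : 'M[R]_(n, m)) := \sum_(i < n) \sum_(j < m) D i j ^+ 2.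
Arguments sq {n m}.

Lemma sq_ge0 n m (D : 'M[R]_(n, m)) : 0 <= sq D.
Proof. by apply: sumr_ge0 => i _; apply: sumr_ge0 => j _; exact: sqr_ge0. Qed.

Lemma entry_sq_le n m (D : 'M[R]_(n, m)) i j : D i j ^+ 2 <= sq D.
Proof.
rewrite /sq (bigD1 i) //= (bigD1 j) //= -addrA lerDl.
apply: addr_ge0; first by apply: sumr_ge0 => k _; exact: sqr_ge0.
by apply: sumr_ge0 => k _; apply: sumr_ge0 => l _; exact: sqr_ge0.
Qed.

Lemma norm_sq_le n m (D : 'M[R]_(n, m)) : `|D| ^+ 2 <= sq D.
Proof.
have [->|] := eqVneq `|D| 0; first by rewrite expr0n /= sq_ge0.
move=> /mx_norm_neq0 [[i j] /= E]; rewrite [`|D|]E.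
by rewrite real_normK ?num_real // entry_sq_le.
Qed.

Lemma sq_eq0 n m (D : 'M[R]_(n, m)) : sq D <= 0 -> D = 0.
Proof.
move=> h; apply/matrixP => i j; rewrite mxE.
have := le_trans (entry_sq_le D i j) h.
by move=> h2; apply/eqP; rewrite -sqrf_eq0 eq_le h2 sqr_ge0.
Qed.

Lemma is_derive_sq n m (D : R -> 'M[R]_(n, m)) Dt t :
  is_derive t (1:R) D Dt ->
  is_derive t (1:R) (fun u => sq (D u)) (\sum_(i < n) \sum_(j < m) (D t i j *: Dt i j + D t i j *: Dt i j)).
Proof.
move=> H.
have -> : (fun u => sq (D u)) = \sum_(i < n) (fun u => \sum_(j < m) D u i j ^+ 2).
  by apply/funext => u; rewrite fct_sumE.
apply: is_derive_sum => i.
have -> : (fun u => \sum_(j < m) D u i j ^+ 2) = \sum_(j < m) (fun u => D u i j ^+ 2).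
  by apply/funext => u; rewrite fct_sumE.
apply: is_derive_sum => j.
have Hij := derive_entry i j H.
exact: (is_deriveM Hij Hij).
Qed.

End Gron.

Section Gron2.
Variable R : realType.

Lemma is_derive_expMh (c : R) (h : R -> R) (hd : R) (u : R) :
  is_derive u (1:R) h hd ->
  is_derive u (1:R) (fun v => expR (c * v) * h v) (expR (c * u) * (c * h u + hd)).
Proof.
move=> H.
have l : is_derive u (1:R) (fun v : R => c * v) c.
  have := is_deriveM (is_derive_cst c u (1:R)) (is_derive_id u (1:R)).
  move=> H1; apply: is_derive_eq H1 _.
  by rewrite /cst /= scaler0 addr0 /GRing.scale /= mulr1.
have e : is_derive u (1:R) (fun v => expR (c * v)) (expR (c * u) * c).
  exact: (is_derive1_comp (f := expR) (g := fun v : R => c * v)).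
have := is_deriveM e H => H2; apply: is_derive_eq H2 _.
rewrite /GRing.scale /=. ring.
Qed.


Lemma uniq_lin n (A : R -> 'M[R]_n) (M : R) (D : R -> 'M[R]_n) (r : R) :
  (forall t, `|A t| <= M) -> (forall t, is_derive t (1:R) D (A t *m D t)) ->
  D r = 0 -> forall t, D t = 0.
Proof.
move=> hA hD hr t.
have M0 : 0 <= M by apply: le_trans (hA 0).
pose L : R := 2 * (n%:R * n%:R * (n%:R * M)).
have L0 : 0 <= L by rewrite /L !mulr_ge0 ?ler0n.
pose h := fun u => sq (D u).
pose hd := fun u => \sum_(i < n) \sum_(j < n)
   (D u i j *: (A u *m D u) i j + D u i j *: (A u *m D u) i j).
have dh u : is_derive u (1:R) h (hd u) by exact: is_derive_sq.
have bnd u : `|hd u| <= L * h u.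
  have t1 i j : `|D u i j *: (A u *m D u) i j + D u i j *: (A u *m D u) i j|
           <= 2 * (`|D u| * (n%:R * M * `|D u|)).
    have t0 : `|D u i j *: (A u *m D u) i j| <= `|D u| * (n%:R * M * `|D u|).
      rewrite normrZ.
      apply: ler_pM; rewrite ?normr_ge0 ?mx_entry_le //.
    apply: le_trans (mx_entry_le _ _ _) _.
    apply: le_trans (mulmx_norm _ _) _.
      by apply: ler_wpM2r => //; apply: ler_wpM2l => //.
    apply: le_trans (ler_normD _ _) _; lra.
  pose c := 2 * (`|D u| * (n%:R * M * `|D u|)).
  apply: (@le_trans _ _ (\sum_(i < n) \sum_(j < n) c)).
    rewrite /hd; apply: le_trans (ler_norm_sum _ _ _) _.
    apply: ler_sum => i _; apply: le_trans (ler_norm_sum _ _ _) _.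
    by apply: ler_sum => j _; exact: t1.
  rewrite !sumr_const !card_ord.
  have -> : c *+ n *+ n = L * `|D u| ^+ 2.
    by rewrite -mulr_natl -[c *+ n]mulr_natl /c /L expr2; ring.
  by apply: ler_wpM2l => //; exact: norm_sq_le.
have h0 : h r = 0.
  rewrite /h hr /sq big1 // => i _; rewrite big1 // => j _.
  by rewrite mxE expr0n.
have ht : h t <= 0.
  have [rt|tr] := leP r t.
    have := @incr_deriv R (fun u => - (expR ((- L) * u) * h u))
      (fun u => - (expR ((- L) * u) * ((- L) * h u + hd u))) r t.
    move=> /(_ _ _ rt) H.
    have : - (expR ((- L) * r) * h r) <= - (expR ((- L) * t) * h t).
      apply: H.
        move=> u; apply: is_deriveN; exact: is_derive_expMh.
      move=> u _; rewrite oppr_ge0 pmulr_rle0 ?expR_gt0 //.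
      have := bnd u; have := ler_norm (hd u); lra.
    rewrite h0 mulr0 oppr0 oppr_ge0 pmulr_rle0 //; exact: expR_gt0.
  have := @incr_deriv R (fun u => expR (L * u) * h u)
      (fun u => expR (L * u) * (L * h u + hd u)) t r.
  move=> /(_ _ _ (ltW tr)) H.
  have : expR (L * t) * h t <= expR (L * r) * h r.
    apply: H.
      move=> u; exact: is_derive_expMh.
    move=> u _; rewrite pmulr_rge0 ?expR_gt0 //.
    have := bnd u; have := ler_norm (- hd u); rewrite normrN; lra.
  rewrite h0 mulr0 pmulr_rle0 //; exact: expR_gt0.
exact: sq_eq0.
Qed.

End Gron2.

Section Evo.
Variable R : realType.

Lemma is_derive_mulmxr m p q (F : R -> 'M[R]_(m, p)) (C : 'M[R]_(p, q)) a F' :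
  is_derive a (1:R) F F' -> is_derive a (1:R) (fun u => F u *m C) (F' *m C).
Proof.
move/derive_cvgP => H; apply/derive_cvgP.
have -> : (fun h : R => h^-1 *: (F (h + a) *m C - F a *m C)) =
          (fun h : R => (h^-1 *: (F (h + a) - F a)) *m C).
  by apply/funext => h; rewrite -mulmxBl scalemxAl.
apply: cvg_mulmx => //; exact: cvg_cst.
Qed.

Lemma is_derive_mulmxl m p q (F : R -> 'M[R]_(p, q)) (C : 'M[R]_(m, p)) a F' :
  is_derive a (1:R) F F' -> is_derive a (1:R) (fun u => C *m F u) (C *m F').
Proof.
move/derive_cvgP => H; apply/derive_cvgP.
have -> : (fun h : R => h^-1 *: (C *m F (h + a) - C *m F a)) =
          (fun h : R => C *m (h^-1 *: (F (h + a) - F a))).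
  by apply/funext => h; rewrite -mulmxBr scalemxAr.
apply: cvg_mulmx => //; exact: cvg_cst.
Qed.

Variables (n : nat) (A : R -> 'M[R]_n) (T : R -> R -> 'M[R]_n) (M : R).
Hypothesis hA : forall t, `|A t| <= M.
Hypothesis ev : evolution_operator A T.

Lemma cocycle t u s : T t u *m T u s = T t s.
Proof.
case: ev => h1 h2.
suff H : forall v, T v u *m T u s - T v s = 0.
  by apply/eqP; rewrite -subr_eq0 H.
apply: (@uniq_lin R n A M (fun v => T v u *m T u s - T v s) u hA).
  move=> v; apply: is_derive_eq.
    apply: is_deriveB; first exact: is_derive_mulmxr (h2 v u).
  by rewrite mulmxBr mulmxA.
by rewrite h1 mul1mx subrr.
Qed.


Lemma T_cont t s : (fun h : R => T t (h + s)) @ 0^' --> T t s.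
Proof.
have [h1 h2] := ev.
have hX : (fun h : R => T (h + s) s) @ 0^' --> (1%:M : 'M[R]_n).
  by rewrite -(h1 s); exact: (derive_cont (h2 s s)).
pose X h := T (h + s) s; pose Y h := T s (h + s).
have YX h : Y h *m X h = 1%:M by rewrite /X /Y cocycle h1.
have Yeq h : Y h - 1%:M = Y h *m (1%:M - X h) by rewrite mulmxBr mulmx1 YX.
have cX : (fun h => n%:R * `|X h - 1%:M|) @ 0^' --> (0:R).
  suff : (fun h => n%:R * `|X h - 1%:M|) @ 0^' --> n%:R * (0:R) by rewrite mulr0.
  apply: cvgM; first exact: cvg_cst.
  exact: (@cvg_norm0 R R 0^' (dnbhs_filter _) _ _ _ hX).
have hY : Y h @[h --> 0^'] --> (1%:M : 'M[R]_n).
  apply/subr_cvg0.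
  apply: (le_norm_cvg0 (v := fun h => 2 * (n%:R * `|X h - 1%:M|))).
    have H : \forall h \near 0^', `| n%:R * `|X h - 1%:M| | <= 1/2.
      by apply: (cvgr0_norm_le _ cX); rewrite divr_gt0.
    move: H; apply: filterS => h hh.
    have hh' : n%:R * `|X h - 1%:M| <= 1/2 by apply: le_trans (ler_norm _) hh.
    have e1 : `|Y h *m (1%:M - X h)| <= n%:R * `|Y h| * `|X h - 1%:M|.
      by rewrite (distrC (X h)); exact: mulmx_norm.
    have e2 : `|Y h| <= 1 + `|Y h - 1%:M|.
      have := ler_normD (1%:M : 'M[R]_n) (Y h - 1%:M).
      rewrite [1%:M + _]addrC subrK => H; apply: le_trans H _.
      by rewrite lerD2r mx_norm1.
    have e3 : `|Y h| <= 2.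
      rewrite Yeq in e2.
      have : `|Y h| * (n%:R * `|X h - 1%:M|) <= `|Y h| * (1/2).
        by apply: ler_wpM2l.
      have := normr_ge0 (Y h); nra.
    rewrite Yeq; apply: le_trans e1 _.
    have nd : 0 <= n%:R * `|X h - 1%:M| by rewrite mulr_ge0 ?ler0n.
    have := ler_wpM2r nd e3.
    have -> : n%:R * `|Y h| * `|X h - 1%:M| = `|Y h| * (n%:R * `|X h - 1%:M|) by ring.
    by [].
  suff : (fun h => 2 * (n%:R * `|X h - 1%:M|)) @ 0^' --> 2 * (0:R) by rewrite mulr0.
  apply: cvgM => //; exact: cvg_cst.
have E : (fun h : R => T t (h + s)) = (fun h => T t s *m Y h).
  by apply/funext => h; rewrite /Y cocycle.
rewrite E -{2}(mulmx1 (T t s)); apply: cvg_mulmx => //; exact: cvg_cst.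
Qed.


Lemma deriv_TZ (Z g : R -> 'cV[R]_n) t :
  (forall s, is_derive s (1:R) Z (A s *m Z s + g s)) ->
  forall s, is_derive s (1:R) (fun u => T t u *m Z u) (T t s *m g s).
Proof.
move=> hZ s; have [h1 h2] := ev; apply/derive_cvgP.
have E : (fun h : R => h^-1 *: (T t (h + s) *m Z (h + s) - T t s *m Z s)) =
   (fun h : R => T t (h + s) *m (h^-1 *: (Z (h + s) - Z s) -
        (h^-1 *: (T (h + s) s - T s s)) *m Z s)).
  apply/funext => h.
  rewrite -(cocycle t (h + s) s) h1 -scalemxAl mulmxBl mul1mx -scalerBr.
  have -> : Z (h + s) - Z s - (T (h + s) s *m Z s - Z s) = Z (h + s) - T (h + s) s *m Z s.
    by rewrite opprB addrA subrK.
  by rewrite -scalemxAr mulmxBr mulmxA.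
rewrite E.
have -> : T t s *m g s = T t s *m ((A s *m Z s + g s) - (A s *m T s s) *m Z s).
  by rewrite h1 mulmx1 [A s *m Z s + g s]addrC addrK.
apply: cvg_mulmx; first exact: T_cont.
apply: cvgB; first exact/derive_cvgP.
apply: cvg_mulmx; last exact: cvg_cst.
exact/derive_cvgP.
Qed.

End Evo.

Section PowStuff.
Variable R : realType.

Lemma powR_exp (x p : R) : 0 < x -> x `^ p = expR (p * ln x).
Proof. by move=> x0; rewrite /powR gt_eqF. Qed.

Lemma powR_Ninv (x p : R) : 0 < x -> x `^ (- p) = (x^-1) `^ p.
Proof.
move=> x0; rewrite !powR_exp ?invr_gt0 //.
by rewrite lnV ?posrE // mulrN mulNr.
Qed.

Lemma alg1 (a b d K g B al : R) : 0 < a -> 0 < b -> 0 < al ->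
  K * (a / b) `^ (- al) * (g * (d / b) * B) =
  (K * g * B / al * a `^ (- al)) * (al * b `^ (al - 1) * d).
Proof.
move=> a0 b0 al0.
rewrite powRM ?invr_ge0 ?(ltW a0) ?(ltW b0) //.
rewrite (@powR_Ninv b^-1) ?invr_gt0 // invrK.
rewrite powRB; last by rewrite (gt_eqF b0) implybT.
rewrite powRr1 ?(ltW b0) //.
field; rewrite ?gt_eqF //.
Qed.

Lemma alg2 (a b d K g B al : R) : 0 < a -> 0 < b -> 0 < al ->
  K * (b / a) `^ (- al) * (g * (d / b) * B) =
  (- (K * g * B / al * a `^ al)) * (- al * b `^ (- al - 1) * d).
Proof.
move=> a0 b0 al0.
rewrite powRM ?invr_ge0 ?(ltW a0) ?(ltW b0) //.
rewrite (@powR_Ninv a^-1) ?invr_gt0 // invrK.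
rewrite powRB; last by rewrite (gt_eqF b0) implybT.
rewrite powRr1 ?(ltW b0) //.
by field; rewrite !gt_eqF.
Qed.

Lemma tail (K B e al : R) : 0 <= K -> 0 <= B -> 0 < e -> 0 < al ->
  exists2 y, 0 < y & forall r, 0 <= r -> r <= y -> K * r `^ al * B <= e.
Proof.
move=> K0 B0 e0 al0.
pose q := e / (K * B + 1).
have q0 : 0 < q by rewrite divr_gt0 // ltr_wpDl // mulr_ge0.
exists (q `^ al^-1); first by rewrite powR_gt0.
move=> r r0 ry.
have h1 : r `^ al <= q.
  have := @ge0_ler_powR R al (ltW al0) r (q `^ al^-1).
  rewrite !nnegrE powR_ge0 => /(_ r0 isT ry).
  by rewrite -powRrM mulVf ?gt_eqF // powRr1 // ltW.
have h2 : K * B * q <= e.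
  rewrite /q mulrA ler_pdivrMr ?ltr_wpDl ?mulr_ge0 //.
  have := mulr_ge0 K0 B0; nra.
have h3 : 0 <= r `^ al by exact: powR_ge0.
have : K * B * r `^ al <= K * B * q by apply: ler_wpM2l => //; exact: mulr_ge0.
have -> : K * r `^ al * B = K * B * r `^ al by ring.
lra.
Qed.

End PowStuff.

Section Key.
Variables (R : realType) (n : nat) (A : R -> 'M[R]_n) (T : R -> R -> 'M[R]_n)
  (mu : R -> R) (P : R -> 'M[R]_n) (K alpha gamma Ma : R) (Z g : R -> 'cV[R]_n).
Hypothesis hA : forall t, `|A t| <= Ma.
Hypothesis ev : evolution_operator A T.
Hypothesis gr : growth_rate mu.
Hypothesis dich : algebraic_dichotomy T mu P K alpha.
Hypothesis g0 : 0 <= gamma.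
Hypothesis hZ : forall s, is_derive s (1:R) Z (A s *m Z s + g s).
Hypothesis hg : forall s, `|g s| <= gamma * (derive1 mu s / mu s) * `|Z s|.

Lemma mu_pos s : 0 < mu s.
Proof. by case: gr. Qed.

Lemma mu_derive s : is_derive s (1:R) mu (derive1 mu s).
Proof.
case: gr => _ [_ [hd _]].
rewrite derive1E; exact: derivableP.
Qed.

Lemma mu'_ge0 s : 0 <= derive1 mu s.
Proof.
case: gr => _ [hinc [hd _]].
apply: (@incr_derive1_ge0 R mu setT s).
- by move=> x _; exact: hd.
- by move=> x y _ _; exact: hinc.
- by rewrite interiorT.
Qed.

Lemma powmu_derive (C p : R) s :
  is_derive s (1:R) (fun u => C * mu u `^ p) (C * (p * mu s `^ (p - 1) * derive1 mu s)).
Proof.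
have h1 : is_derive s (1:R) (fun u => mu u `^ p) (p * mu s `^ (p - 1) * derive1 mu s).
  have H := is_derive1_comp (is_derive1_powR p (mu_pos s)) (mu_derive s).
  exact: H.
have := is_deriveM (is_derive_cst C s (1:R)) h1.
move=> H; apply: is_derive_eq H _.
by rewrite /cst /GRing.scale /= mulr0 addr0 mulrC.
Qed.

Lemma g_bound B s : (forall s, `|Z s| <= B) -> `|g s| <= gamma * (derive1 mu s / mu s) * B.
Proof.
move=> hB; apply: le_trans (hg s) _; apply: ler_wpM2l => //.
by rewrite mulr_ge0 ?divr_ge0 ?mu'_ge0 ?(ltW (mu_pos s)).
Qed.


Lemma Ppart B t : (forall s, `|Z s| <= B) -> `|P t *m Z t| <= K * gamma * B / alpha.
Proof.
move=> hB.
have B0 : 0 <= B := le_trans (normr_ge0 _) (hB 0).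
have [K0 [a0 [Pid [hcomm hP hQ]]]] := dich.
have [h1 h2] := ev.
have [mupos [muinc [mud [mu0 [mulim1 mulim2]]]]] := gr.
set c := K * gamma * B / alpha.
have c0 : 0 <= c by rewrite /c divr_ge0 ?mulr_ge0 // ltW.
have main s : s <= t -> `|P t *m Z t| <= c + K * (mu t / mu s) `^ (- alpha) * B.
  move=> st.
  pose F u := P t *m (T t u *m Z u).
  pose F' u := P t *m (T t u *m g u).
  pose C := c * mu t `^ (- alpha).
  pose phi u := C * mu u `^ alpha.
  pose phi' u := C * (alpha * mu u `^ (alpha - 1) * derive1 mu u).
  have hF u : is_derive u (1:R) F (F' u).
    exact: is_derive_mulmxl (deriv_TZ hA ev t hZ u).
  have bound : forall u, s <= u <= t -> `|F' u| <= phi' u.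
    move=> u /andP[su ut].
    have -> : F' u = T t u *m P u *m g u by rewrite /F' mulmxA hcomm.
    apply: le_trans (hP t u (g u) ut) _.
    rewrite /phi' /C /c -alg1 ?mu_pos //.
    apply: ler_wpM2l; first by rewrite mulr_ge0 ?powR_ge0 // ltW.
    exact: g_bound.
  have hm := @mvb R n 1 F F' phi phi' s t st hF (fun u => powmu_derive C alpha u) bound.
  have Ft : F t = P t *m Z t by rewrite /F h1 mul1mx.
  have phit : phi t = c.
    rewrite /phi /C -mulrA -powRD; last by rewrite (gt_eqF (mu_pos t)) implybT.
    by rewrite addNr powRr0 mulr1.
  have phis : 0 <= phi s.
    by rewrite /phi /C; apply: mulr_ge0; [apply: mulr_ge0 => //; apply: powR_ge0 | apply: powR_ge0].
  have Fs : `|F s| <= K * (mu t / mu s) `^ (- alpha) * B.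
    rewrite /F mulmxA -hcomm.
    apply: le_trans (hP t s (Z s) st) _.
    by apply: ler_wpM2l; rewrite ?mulr_ge0 ?powR_ge0 ?(ltW K0).
  rewrite -Ft; have := ler_normD (F t - F s) (F s); rewrite subrK.
  lra.
apply/ler_addgt0Pr => e e0.
have [y y0 hy] := tail (ltW K0) B0 e0 a0.
move/cvgr0Pnorm_lt: (mulim1) => /(_ _ (mulr_gt0 y0 (mupos t))).
case => M [Mr HM].
pose s := Num.min (M - 1) t.
have sM : s < M by rewrite /s gt_min ltrBlDr ltrDl ltr01.
have st : s <= t by rewrite /s ge_min lexx orbT.
have h := HM s sM.
apply: le_trans (main s st) _; rewrite lerD2l.
rewrite powR_Ninv ?divr_gt0 ?mupos // invf_div.
apply: hy; first by rewrite divr_ge0 ?ltW ?mupos.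
rewrite ler_pdivrMr ?mupos //; apply: le_trans (ler_norm _) (ltW h).
Qed.


Lemma Qpart B t : (forall s, `|Z s| <= B) -> `|(1%:M - P t) *m Z t| <= K * gamma * B / alpha.
Proof.
move=> hB.
have B0 : 0 <= B := le_trans (normr_ge0 _) (hB 0).
have [K0 [a0 [Pid [hcomm hP hQ]]]] := dich.
have [h1 h2] := ev.
have [mupos [muinc [mud [mu0 [mulim1 mulim2]]]]] := gr.
set c := K * gamma * B / alpha.
have c0 : 0 <= c by rewrite /c divr_ge0 ?mulr_ge0 // ltW.
have comm1 u : (1%:M - P t) *m T t u = T t u *m (1%:M - P u).
  by rewrite mulmxBl mulmxBr mul1mx mulmx1 hcomm.
have main s : t <= s -> `|(1%:M - P t) *m Z t| <= c + K * (mu s / mu t) `^ (- alpha) * B.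
  move=> ts.
  pose F u := (1%:M - P t) *m (T t u *m Z u).
  pose F' u := (1%:M - P t) *m (T t u *m g u).
  pose C := - (c * mu t `^ alpha).
  pose phi u := C * mu u `^ (- alpha).
  pose phi' u := C * (- alpha * mu u `^ (- alpha - 1) * derive1 mu u).
  have hF u : is_derive u (1:R) F (F' u).
    exact: is_derive_mulmxl (deriv_TZ hA ev t hZ u).
  have bound : forall u, t <= u <= s -> `|F' u| <= phi' u.
    move=> u /andP[tu us].
    have -> : F' u = T t u *m (1%:M - P u) *m g u by rewrite /F' mulmxA comm1.
    apply: le_trans (hQ t u (g u) tu) _.
    rewrite /phi' /C /c -alg2 ?mu_pos //.
    apply: ler_wpM2l; first by rewrite mulr_ge0 ?powR_ge0 // ltW.
    exact: g_bound.
  have hm := @mvb R n 1 F F' phi phi' t s ts hF (fun u => powmu_derive C (- alpha) u) bound.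
  have Ft : F t = (1%:M - P t) *m Z t by rewrite /F h1 mul1mx.
  have phit : phi t = - c.
    rewrite /phi /C mulNr -mulrA -powRD; last by rewrite (gt_eqF (mu_pos t)) implybT.
    by rewrite subrr powRr0 mulr1.
  have phis : phi s <= 0.
    rewrite /phi /C mulNr oppr_le0; apply: mulr_ge0; last exact: powR_ge0.
    by apply: mulr_ge0 => //; apply: powR_ge0.
  have Fs : `|F s| <= K * (mu s / mu t) `^ (- alpha) * B.
    rewrite /F mulmxA comm1.
    apply: le_trans (hQ t s (Z s) ts) _.
    by apply: ler_wpM2l; rewrite ?mulr_ge0 ?powR_ge0 ?(ltW K0).
  rewrite -Ft; have := ler_normD (F t - F s) (F s); rewrite subrK.
  rewrite distrC in hm.
  lra.
apply/ler_addgt0Pr => e e0.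
have [y y0 hy] := tail (ltW K0) B0 e0 a0.
move/cvgryPge: (mulim2) => /(_ (mu t / y)).
case => M [Mr HM].
pose s := Num.max (M + 1) t.
have sM : M < s by rewrite /s lt_max ltrDl ltr01.
have ts : t <= s by rewrite /s le_max lexx orbT.
have h := HM s sM.
apply: le_trans (main s ts) _; rewrite lerD2l.
rewrite powR_Ninv ?divr_gt0 ?mupos // invf_div.
apply: hy; first by rewrite divr_ge0 ?ltW ?mupos.
by rewrite ler_pdivrMr ?mupos // mulrC -ler_pdivrMr.
Qed.

Lemma key B t : (forall s, `|Z s| <= B) -> `|Z t| <= 2 * (K * gamma * B / alpha).
Proof.
move=> hB.
have -> : Z t = P t *m Z t + (1%:M - P t) *m Z t.
  by rewrite mulmxBl mul1mx addrC subrK.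
apply: le_trans (ler_normD _ _) _.
have := Ppart t hB; have := Qpart t hB; lra.
Qed.

End Key.

Section Geo.
Variable R : realType.
Lemma geom_le0 (th Mz z : R) : 0 <= th -> th < 1 ->
  (forall k, z <= th ^+ k * Mz) -> z <= 0.
Proof.
move=> th0 th1 it.
rewrite leNgt; apply/negP => Zt.
have cv : (fun k => th ^+ k * Mz) @ \oo --> (0 : R).
  rewrite -(mul0r Mz); apply: cvgMl; apply: cvg_expr.
  by rewrite ger0_norm.
move/cvgr0Pnorm_lt: (cv) => /(_ _ Zt).
case=> N _ HN.
have := HN N (leqnn N); rewrite /=.
have := it N; have := ler_norm (th ^+ N * Mz); lra.
Qed.
End Geo.

End Aux.
Import Aux.
Unset Implicit Arguments.

Local Open Scope ring_scope.

Theorem lemma3p4 (R : realType) (n : nat)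
  (A : R -> 'M[R]_n) (T : R -> R -> 'M[R]_n) (mu : R -> R)
  (P : R -> 'M[R]_n) (K alpha beta gamma : R)
  (f : R -> 'cV[R]_n -> 'cV[R]_n) (x : R -> 'cV[R]_n) :
  continuous A ->
  (exists M : R, forall t, `|A t| <= M) ->
  evolution_operator A T ->
  growth_rate mu ->
  algebraic_dichotomy T mu P K alpha ->
  continuous (fun p : R * 'cV[R]_n => f p.1 p.2) ->
  0 <= beta -> 0 <= gamma ->
  (forall t z, `|f t z| <= beta * (derive1 mu t / mu t)) ->
  (forall t z1 z2, `|f t z1 - f t z2| <= gamma * (derive1 mu t / mu t) * `|z1 - z2|) ->
  6 * K * gamma / alpha < 1 ->
  is_solution (fun t z => A t *m z + f t z) x ->
  forall Z : R -> 'cV[R]_n,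
    (is_solution (fun t z => A t *m z + (f t (x t + z) - f t (x t))) Z /\ bounded_on_R Z)
    <-> Z = (fun _ => 0).
Proof.
move=> _ [Ma hA] ev gr dich _ b0 g0 fb fl small _ Z; split; last first.
  move=> ->; split.
    move=> t /=; apply: is_derive_eq (is_derive_cst 0 t 1) _.
    by rewrite mulmx0 add0r addr0 subrr.
  by exists 0 => t; rewrite normr0.
move=> [hZ [Mz hMz]].
pose g s := f s (x s + Z s) - f s (x s).
have hZ' : forall s, is_derive s (1:R) Z (A s *m Z s + g s) := hZ.
have hg : forall s, `|g s| <= gamma * (derive1 mu s / mu s) * `|Z s|.
  move=> s; have := fl s (x s + Z s) (x s).
  by rewrite addrAC subrr add0r.
have [K0 [a0 _]] := dich.
pose th := 2 * K * gamma / alpha.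
have th0 : 0 <= th by rewrite /th divr_ge0 ?mulr_ge0 ?(ltW K0) ?(ltW a0).
have th1 : th < 1.
  have -> : th = (6 * K * gamma / alpha) / 3.
    by rewrite /th; field; rewrite gt_eqF.
  lra.
have it : forall k s, `|Z s| <= th ^+ k * Mz.
  elim=> [|k IH] s; first by rewrite expr0 mul1r.
  apply: le_trans (key hA ev gr dich g0 hZ' hg s IH) _.
  rewrite exprS /th le_eqVlt; apply/orP; left; apply/eqP.
  by field; rewrite gt_eqF.
apply/funext => t; apply/normr0_eq0/eqP; rewrite eq_le normr_ge0 andbT.
exact: (geom_le0 th0 th1 (fun k => it k t)).
Qed.
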